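(* Every statistically convergent sequence in an $S$-metric space $(X,S)$ is statistically bounded.
   Context: An $S$-metric on a nonempty set $X$ is a function $S:X^3\to[0,\infty)$ such that for all $x,y,z,a\in X$: $S(x,y,z)=0$ if and only if $x=y=z$, and $S(x,y,z)\le S(x,x,a)+S(y,y,a)+S(z,z,a)$. For $B\subset\mathbb N$ the natural density is $\delta(B)=\lim_{n\to\infty}\frac{|\{k\in B:k\le n\}|}{n}$ when the limit exists. A sequence $\{x_n\}$ is statistically convergent to $x\in X$ if for every $\varepsilon>0$, $\delta(\{n: S(x_n,x_n,x)\ge\varepsilon\})=0$. A sequence $\{x_n\}$ is statistically bounded if for any fixed $u\in X$ there exists a positive real number $B$ such that $\delta(\{n\in\mathbb N: S(x_n,x_n,u)\ge B\})=0$. *)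

(* Defs.v *)
From Stdlib Require Import Reals ClassicalDescription.
Open Scope R_scope.

Record is_S_metric {X : Type} (S : X -> X -> X -> R) : Prop := {
  Smet_nonneg : forall x y z, 0 <= S x y z;
  Smet_zero : forall x y z, S x y z = 0 <-> (x = y /\ y = z);
  Smet_ineq : forall x y z a, S x y z <= S x x a + S y y a + S z z a
}.

Definition ind (B : nat -> Prop) (k : nat) : R :=
  if excluded_middle_informative (B k) then 1 else 0.

(* |{k in B : 1 <= k <= n}|, with N = {1,2,...} *)
Fixpoint count_upto (B : nat -> Prop) (n : nat) : R :=
  match n with
  | O => 0
  | S m => count_upto B m + ind B (S m)
  end.

Definition has_density (B : nat -> Prop) (d : R) : Prop :=
  Un_cv (fun n => count_upto B n / INR n) d.

(* statistical convergence of x (indexed by N = {1,2,...}; x 0 is irrelevant) *)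
Definition stat_converges {X : Type} (S : X -> X -> X -> R) (x : nat -> X) (l : X) : Prop :=
  forall eps, 0 < eps -> has_density (fun n => S (x n) (x n) l >= eps) 0.

Definition stat_bounded {X : Type} (S : X -> X -> X -> R) (x : nat -> X) : Prop :=
  forall u : X, exists B, 0 < B /\ has_density (fun n => S (x n) (x n) u >= B) 0.

(* Main.v *)
Require Import Defs.
From Stdlib Require Import Reals Lra ClassicalDescription.
Open Scope R_scope.

Lemma ind_bounds (B : nat -> Prop) (k : nat) : 0 <= Defs.ind B k <= 1.
Proof. unfold Defs.ind; destruct excluded_middle_informative; lra. Qed.

Lemma ind_mono (A B : nat -> Prop) (k : nat) : (forall n, A n -> B n) -> Defs.ind A k <= Defs.ind B k.
Proof.
  intros H; unfold Defs.ind; destruct (excluded_middle_informative (A k));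
  destruct (excluded_middle_informative (B k)); try lra.
  exfalso; auto.
Qed.

Lemma count_mono (A B : nat -> Prop) (n : nat) : (forall k, A k -> B k) -> 0 <= count_upto A n <= count_upto B n.
Proof.
  intros H; induction n; simpl; [lra|].
  pose proof (ind_mono A B (S n) H). pose proof (ind_bounds A (S n)). lra.
Qed.

Lemma density0_sub (A B : nat -> Prop) : (forall k, A k -> B k) ->
  has_density B 0 -> has_density A 0.
Proof.
  intros H hB eps he. destruct (hB eps he) as [N HN]. exists N; intros n hn.
  specialize (HN n hn). unfold R_dist in *. rewrite Rminus_0_r in *.
  pose proof (count_mono A B n H).
  assert (0 <= / INR n).
  { destruct n. simpl. rewrite Rinv_0. lra.
    left. apply Rinv_0_lt_compat. apply lt_0_INR. auto with arith. }
  unfold Rdiv in *.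
  assert (0 <= count_upto A n * / INR n) by (apply Rmult_le_pos; lra).
  assert (count_upto A n * / INR n <= count_upto B n * / INR n)
    by (apply Rmult_le_compat_r; lra).
  rewrite Rabs_right in HN by lra. rewrite Rabs_right by lra. lra.
Qed.

Theorem corollary3p2 (X : Type) (S : X -> X -> X -> R) (hS : is_S_metric S)
  (x : nat -> X) (l : X) :
  stat_converges S x l -> stat_bounded S x.
Proof.
  intros hc u. exists (S u u l + 1). split.
  { pose proof (Smet_nonneg S hS u u l). lra. }
  apply density0_sub with (B := fun n => S (x n) (x n) l >= 1/2).
  - intros k hk. pose proof (Smet_ineq S hS (x k) (x k) u l). lra.
  - apply hc. lra.
Qed.
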